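(* Let $h>0$ and let $(\tau,\mu):\mathbb R\to\mathbb R^2$ be any solution of the system $\tau'=1+K(\tau,\mu)\mu$, $\mu'=-K(\tau,\mu)\tau$. Then $\tau$ has exactly one zero $s_0$, with $\tau<0$ on $(-\infty,s_0)$ and $\tau>0$ on $(s_0,+\infty)$. Consequently $r^2=\tau^2+\mu^2$ attains a global minimum (at $s_0$, its only critical point) and $r^2(s)\to+\infty$ as $s\to\pm\infty$.
   Context: Fix $h>0$. For $(\tau,\mu)\in\mathbb R^2$ put $r^2=\tau^2+\mu^2$ and define $K:\mathbb R^2\to\mathbb R$ by $$K(\tau,\mu)=\frac{2\big(\tau^2+h^2(1+\mu^2)\big)\tau+(h^2-1)(1+\mu^2)\mu}{(1+r^2)(h^2+r^2)}.$$ Consider the autonomous ODE system $\tau'=1+K(\tau,\mu)\mu$, $\mu'=-K(\tau,\mu)\tau$ for functions $s\mapsto(\tau(s),\mu(s))$; all its solutions are defined on $\mathbb R$. *)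

(* Defs.v *)
From Stdlib Require Import Reals.
Open Scope R_scope.

Definition K (h tau mu : R) : R :=
  let r2 := tau ^ 2 + mu ^ 2 in
  (2 * (tau ^ 2 + h ^ 2 * (1 + mu ^ 2)) * tau + (h ^ 2 - 1) * (1 + mu ^ 2) * mu)
  / ((1 + r2) * (h ^ 2 + r2)).

Definition is_solution (h : R) (tau mu : R -> R) : Prop :=
  forall s : R,
    derivable_pt_lim tau s (1 + K h (tau s) (mu s) * mu s) /\
    derivable_pt_lim mu s (- (K h (tau s) (mu s) * tau s)).

(* Main.v *)
Require Import Defs.
From Stdlib Require Import Reals Lra Psatz Classical.
Open Scope R_scope.

Lemma deriv_pos_local f x l : derivable_pt_lim f x l -> 0 < l ->
  exists eta, 0 < eta /\ (forall u, x < u < x + eta -> f x < f u) /\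
                         (forall u, x - eta < u < x -> f u < f x).
Proof.
  intros H Hl. destruct (H l Hl) as [d Hd].
  exists d. split; [apply cond_pos|]. split.
  - intros u Hu. specialize (Hd (u - x)).
    replace (x + (u - x)) with u in Hd by ring.
    assert (Hq: 0 < (f u - f x) / (u - x)).
    { assert (A: Rabs ((f u - f x) / (u - x) - l) < l) by (apply Hd; [lra| rewrite Rabs_right; lra]).
      apply Rabs_def2 in A. lra. }
    assert (f u - f x = (f u - f x)/(u-x) * (u - x)) by (field; lra).
    nra.
  - intros u Hu. specialize (Hd (u - x)).
    replace (x + (u - x)) with u in Hd by ring.
    assert (Hq: 0 < (f u - f x) / (u - x)).
    { assert (A: Rabs ((f u - f x) / (u - x) - l) < l) by (apply Hd; [lra| rewrite Rabs_left; lra]).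
      apply Rabs_def2 in A. lra. }
    assert (f u - f x = (f u - f x)/(u-x) * (u - x)) by (field; lra).
    nra.
Qed.

Lemma cont_local f x l : derivable_pt_lim f x l -> 0 < f x ->
  exists eta, 0 < eta /\ forall u, Rabs (u - x) < eta -> 0 < f u.
Proof.
  intros H Hf. destruct (H 1 Rlt_0_1) as [d Hd].
  set (L := Rabs l + 1).
  assert (HL: 0 < L) by (unfold L; pose proof (Rabs_pos l); lra).
  exists (Rmin d (f x / L)). split.
  { apply Rmin_pos; [apply cond_pos| apply Rdiv_lt_0_compat; lra]. }
  intros u Hu.
  destruct (Req_dec u x) as [E|E]; [subst; lra|].
  specialize (Hd (u - x)). replace (x + (u - x)) with u in Hd by ring.
  assert (A: Rabs ((f u - f x) / (u - x) - l) < 1).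
  { apply Hd; [lra|]. pose proof (Rmin_l d (f x / L)). lra. }
  set (q := (f u - f x) / (u - x)) in *.
  assert (Eq: f u - f x = q * (u - x)) by (unfold q; field; lra).
  assert (Hq: Rabs q < L).
  { unfold L. replace q with ((q - l) + l) by ring.
    pose proof (Rabs_triang (q - l) l). lra. }
  assert (Hu2: Rabs (u - x) < f x / L) by (pose proof (Rmin_r d (f x / L)); lra).
  assert (Rabs (f u - f x) < f x).
  { rewrite Eq, Rabs_mult.
    assert (Rabs (u - x) * L < f x).
    { apply (Rmult_lt_compat_r L) in Hu2; [|lra].
      replace (f x / L * L) with (f x) in Hu2 by (field; lra). lra. }
    pose proof (Rabs_pos q). pose proof (Rabs_pos (u-x)). nra. }
  apply Rabs_def2 in H0. lra.
Qed.

Lemma L1 f f' a b : a < b -> (forall x, derivable_pt_lim f x (f' x)) ->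
  (forall x, a <= x <= b -> f x = 0 -> 0 < f' x) -> 0 <= f a -> 0 < f b.
Proof.
  intros Hab Hd Hz Ha.
  set (E := fun t => a <= t <= b /\ forall u, a < u <= t -> 0 < f u).
  assert (Hb: bound E) by (exists b; intros t [Ht _]; lra).
  assert (He: exists x, E x) by (exists a; split; [lra| intros; lra]).
  destruct (completeness E Hb He) as [c [Hub Hlub]].
  assert (Hac: a <= c) by (apply Hub; split; [lra| intros; lra]).
  assert (Hcb: c <= b) by (apply Hlub; intros t [Ht _]; lra).
  assert (Hi: forall u, a < u < c -> 0 < f u).
  { intros u Hu. apply NNPP. intro Hn.
    assert (c <= u); [|lra].
    apply Hlub. intros t [Ht Hft]. apply Rnot_lt_le. intro Htu.
    apply Hn, Hft; lra. }
  destruct (Rtotal_order (f c) 0) as [Hc|[Hc|Hc]].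
  - destruct (Req_dec c a) as [->|Hca]; [lra|].
    assert (Hd' := derivable_pt_lim_opp f c (f' c) (Hd c)).
    destruct (cont_local (opp_fct f) c _ Hd') as [eta [Heta Hn]].
    { unfold opp_fct; lra. }
    set (u := c - Rmin eta (c - a) / 2).
    assert (Hm: 0 < Rmin eta (c - a)) by (apply Rmin_pos; lra).
    pose proof (Rmin_l eta (c-a)). pose proof (Rmin_r eta (c-a)).
    specialize (Hn u). unfold opp_fct in Hn.
    assert (0 < f u) by (apply Hi; unfold u; lra).
    assert (0 < - f u); [|lra]. apply Hn. unfold u. rewrite Rabs_left; lra.
  - assert (Hp: 0 < f' c) by (apply Hz; [lra|exact Hc]).
    destruct (deriv_pos_local f c _ (Hd c) Hp) as [eta [Heta [Hr Hl]]].
    destruct (Req_dec c a) as [Hca|Hca].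
    + pose proof (Rmin_l (c + eta/2) b). pose proof (Rmin_r (c + eta/2) b).
      assert (c < Rmin (c + eta/2) b) by (apply Rmin_glb_lt; lra).
      set (t := Rmin (c + eta/2) b) in *.
      assert (t <= c); [|lra].
      apply Hub. split; [split; lra|]. intros u Hu.
      rewrite <- Hc. apply Hr. lra.
    + set (u := c - Rmin eta (c - a) / 2).
      assert (Hm: 0 < Rmin eta (c - a)) by (apply Rmin_pos; lra).
      pose proof (Rmin_l eta (c-a)). pose proof (Rmin_r eta (c-a)).
      assert (0 < f u) by (apply Hi; unfold u; lra).
      assert (f u < f c) by (apply Hl; unfold u; lra). lra.
  - destruct (Req_dec c b) as [<-|Hcb']; [exact Hc|].
    destruct (cont_local f c _ (Hd c) Hc) as [eta [Heta Hn]].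
    pose proof (Rmin_l (c + eta/2) b). pose proof (Rmin_r (c + eta/2) b).
    assert (c < Rmin (c + eta/2) b) by (apply Rmin_glb_lt; lra).
    set (t := Rmin (c + eta/2) b) in *.
    assert (t <= c); [|lra].
    apply Hub. split; [split; lra|]. intros u Hu.
    destruct (Rlt_le_dec u c) as [Huc|Huc]; [apply Hi; lra|].
    apply Hn. rewrite Rabs_right; lra.
Qed.

Definition dl (h : R) := Rmin (1/2) (h^2/2).
Definition cc (h : R) := h^2 / (8 * (h^2 + 1)).

Lemma dl_pos h : 0 < h -> 0 < dl h.
Proof. intros. unfold dl. apply Rmin_pos; nra. Qed.
Lemma cc_pos h : 0 < h -> 0 < cc h.
Proof. intros. unfold cc. apply Rdiv_lt_0_compat; nra. Qed.

Lemma barrier h t m : 0 < h -> Rabs t <= dl h -> cc h <= 1 + K h t m * m.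
Proof.
  intros Hh Ht. unfold dl in Ht.
  pose proof (Rmin_l (1/2) (h^2/2)). pose proof (Rmin_r (1/2) (h^2/2)).
  set (x := Rabs t) in *.
  assert (Hx0: 0 <= x) by apply Rabs_pos.
  assert (Ht2: t^2 = x^2) by (unfold x; rewrite <- Rsqr_pow2, <- Rsqr_pow2; apply Rsqr_abs).
  set (a := 1 + m^2).
  assert (Ha: 1 <= a) by (unfold a; nra).
  assert (Hm: 2 * Rabs m <= a).
  { unfold a. assert (m^2 = Rabs m ^2) by (rewrite <- Rsqr_pow2, <- Rsqr_pow2; apply Rsqr_abs).
    pose proof (Rabs_pos m). pose proof (pow2_ge_0 (Rabs m - 1)). nra. }
  set (N1 := h^2*a^2 + t^2*(1+h^2+2*m^2) + t^4 + 2*t*m*(t^2 + h^2*a)).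
  set (D := (1 + (t^2+m^2)) * (h^2 + (t^2+m^2))).
  assert (HD: 0 < D) by (unfold D; nra).
  assert (HE: 1 + K h t m * m = N1 / D).
  { unfold K, N1, D, a. field. split; apply Rgt_not_eq; nra. }
  rewrite HE.
  assert (B1: Rabs (2*t*m*(t^2 + h^2*a)) <= x * a * (x^2 + h^2*a)).
  { rewrite !Rabs_mult. rewrite (Rabs_right 2) by lra.
    rewrite (Rabs_right (t^2 + h^2*a)) by nra. fold x. rewrite Ht2.
    pose proof (Rabs_pos m). assert (0 <= x*(x^2+h^2*a)) by (apply Rmult_le_pos; nra). nra. }
  assert (B2: x * a * (x^2 + h^2*a) <= 5/8 * h^2 * a^2).
  { assert (x^3 <= h^2/8) by nra.
    assert (x * a * x^2 <= h^2/8 * a^2) by nra.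
    assert (x * a * (h^2*a) <= h^2/2 * a^2) by nra. nra. }
  assert (B3: 3/8 * h^2 * a^2 <= N1).
  { pose proof (Rle_abs (-(2*t*m*(t^2 + h^2*a)))) as B1'. rewrite Rabs_Ropp in B1'. unfold N1. assert (0 <= t^2*(1+h^2+2*m^2) + t^4) by nra. lra. }
  assert (B4: D <= 2 * (h^2+1) * a^2).
  { unfold D. assert (1 + (t^2+m^2) <= 2 * a) by (unfold a; nra).
    assert (h^2 + (t^2+m^2) <= (h^2+1) * a) by (unfold a; nra).
    assert (0 <= h^2 + (t^2+m^2)) by nra. nra. }
  unfold cc. apply (Rmult_le_reg_r D); [exact HD|].
  replace (N1 / D * D) with N1 by (field; lra).
  assert (h^2 * / (8 * (h^2+1)) * D <= h^2 * / (8 * (h^2+1)) * (2 * (h^2+1) * a^2)).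
  { apply Rmult_le_compat_l; [|exact B4]. apply Rmult_le_pos; [nra|]. apply Rlt_le, Rinv_0_lt_compat. nra. }
  assert (h^2 * / (8 * (h^2+1)) * (2 * (h^2+1) * a^2) = h^2 * a^2 / 4) by (field; nra).
  nra.
Qed.

Lemma dlim_eq f x l l' : l = l' -> derivable_pt_lim f x l -> derivable_pt_lim f x l'.
Proof. intros ->; auto. Qed.

Lemma K_odd h a b : 0 < h -> K h (-a) (-b) = - K h a b.
Proof.
  intros Hh. unfold K. cbv zeta. field.
  split; apply Rgt_not_eq; nra.
Qed.

Section Sol.
Variables (h : R) (tau mu : R -> R).
Hypothesis Hh : 0 < h.
Hypothesis Hs : is_solution h tau mu.

Definition T' s := 1 + K h (tau s) (mu s) * mu s.

Lemma tau_d s : derivable_pt_lim tau s (T' s).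
Proof. apply (Hs s). Qed.

Lemma r2_deriv s : derivable_pt_lim (fun t => tau t ^ 2 + mu t ^ 2) s (2 * tau s).
Proof.
  destruct (Hs s) as [H1 H2].
  pose proof (derivable_pt_lim_comp tau (fun x => x ^ 2) s _ _ H1 (derivable_pt_lim_pow (tau s) 2)) as A.
  pose proof (derivable_pt_lim_comp mu (fun x => x ^ 2) s _ _ H2 (derivable_pt_lim_pow (mu s) 2)) as B.
  pose proof (derivable_pt_lim_plus _ _ s _ _ A B) as C.
  eapply dlim_eq; [|exact C]. simpl. ring.
Qed.

Lemma bar s : Rabs (tau s) <= dl h -> cc h <= T' s.
Proof. intros. apply barrier; auto. Qed.

Lemma above_stays k a b : Rabs k <= dl h -> k <= tau a -> a < b -> k < tau b.
Proof.
  intros Hk Ha Hab.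
  assert (0 < tau b - k); [|lra].
  apply (L1 (fun t => tau t - k) T' a b Hab).
  - intros x. eapply dlim_eq; [|apply (derivable_pt_lim_minus tau (fun _ => k) x _ 0 (tau_d x) (derivable_pt_lim_const k x))]. ring.
  - intros x _ Hx. assert (tau x = k) by lra. pose proof (cc_pos h Hh).
    assert (cc h <= T' x) by (apply bar; rewrite H; auto). lra.
  - lra.
Qed.

Lemma fwd_grow s0 : 0 <= tau s0 ->
  forall M, exists N, forall s, N < s -> M < tau s ^ 2 + mu s ^ 2.
Proof.
  intros H0 M. pose proof (dl_pos h Hh) as Hd. pose proof (cc_pos h Hh) as Hc.
  set (d := dl h) in *. set (c := cc h) in *.
  set (a := s0 + 2 * d / c).
  assert (Ha: s0 < a) by (unfold a; assert (0 < 2*d/c) by (apply Rdiv_lt_0_compat; lra); lra).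
  assert (Hta: d < tau a).
  { assert (0 < tau a - (c/2) * (a - s0)).
    { apply (L1 (fun t => tau t - (c/2) * (t - s0)) (fun t => T' t - c/2) s0 a Ha).
      - intros x. 
        assert (D1: derivable_pt_lim (fun t => (c/2) * (t - s0)) x (c/2)).
        { apply (dlim_eq _ _ ((c/2) * (1 - 0))); [ring|].
          apply derivable_pt_lim_scal.
          apply (derivable_pt_lim_minus id (fun _ => s0) x 1 0 (derivable_pt_lim_id x) (derivable_pt_lim_const s0 x)). }
        apply (derivable_pt_lim_minus tau _ x _ _ (tau_d x) D1).
      - intros x Hx Hz.
        assert (tau x = c/2 * (x - s0)) by lra.
        assert (c/2 * (x - s0) <= d).
        { assert (c/2 * (a - s0) = d) by (unfold a; field; lra).
          assert (c/2 * (x - s0) <= c/2 * (a - s0)) by (apply Rmult_le_compat_l; lra). lra. }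
        assert (0 <= c/2 * (x - s0)) by (apply Rmult_le_pos; lra).
        assert (c <= T' x) by (apply bar; fold d; rewrite H; rewrite Rabs_right; lra). lra.
      - lra. }
    assert (c/2 * (a - s0) = d) by (unfold a; field; lra). lra. }
  assert (Hab: forall s, a < s -> d < tau s).
  { intros s Hs'. apply (above_stays d a s); auto; fold d. rewrite Rabs_right; lra. lra. }
  exists (a + Rabs M / (2*d)). intros s Hs'.
  assert (Hsa: a < s) by (assert (0 <= Rabs M / (2*d)) by (apply Rle_mult_inv_pos; [apply Rabs_pos|lra]); lra).
  destruct (MVT_cor2 (fun t => tau t ^ 2 + mu t ^ 2) (fun t => 2 * tau t) a s Hsa (fun x _ => r2_deriv x)) as [xi [Hxi Hr]].
  assert (d < tau xi) by (apply Hab; lra).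
  assert (0 <= tau a ^ 2 + mu a ^ 2) by nra.
  assert (2 * d * (s - a) > Rabs M).
  { assert (Q: s - a > Rabs M / (2*d)) by lra.
    apply (Rmult_gt_compat_l (2*d)) in Q; [|lra].
    replace (2*d*(Rabs M/(2*d))) with (Rabs M) in Q by (field; lra). lra. }
  pose proof (Rle_abs M). nra.
Qed.

Lemma no_neg : ~ (forall s, tau s < 0).
Proof.
  intros Hn. pose proof (dl_pos h Hh) as Hd. pose proof (cc_pos h Hh) as Hc.
  set (d := dl h) in *. set (c := cc h) in *.
  set (r := tau 0 ^ 2 + mu 0 ^ 2).
  assert (Hr: 0 <= r) by (unfold r; nra).
  set (T := r / d + 1).
  assert (HT: 0 < T) by (unfold T; assert (0 <= r/d) by (apply Rle_mult_inv_pos; lra); lra).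
  destruct (MVT_cor2 (fun t => tau t ^ 2 + mu t ^ 2) (fun t => 2 * tau t) 0 T HT (fun x _ => r2_deriv x)) as [xi [Hm Hxi]].
  assert (Hxi2: - d < tau xi).
  { assert (0 <= tau T ^ 2 + mu T ^ 2) by nra.
    fold r in Hm. rewrite Rminus_0_r in Hm.
    assert (2 * tau xi * T >= - r) by lra.
    assert (d * T > r) by (unfold T; replace (d * (r/d+1)) with (r + d) by (field; lra); lra).
    nra. }
  assert (Hst: forall s, xi < s -> - d < tau s).
  { intros s Hs'. apply (above_stays (-d) xi s); auto; fold d. rewrite Rabs_left; lra. lra. }
  set (T2 := d / c + 1).
  assert (HT2: 0 < T2) by (unfold T2; assert (0 <= d/c) by (apply Rle_mult_inv_pos; lra); lra).
  assert (Hl: xi < xi + T2) by lra.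
  destruct (MVT_cor2 tau T' xi (xi + T2) Hl (fun x _ => tau_d x)) as [eta [Hm2 Heta]].
  assert (- d < tau eta) by (apply Hst; lra).
  assert (tau eta < 0) by apply Hn.
  assert (c <= T' eta) by (apply bar; fold d; rewrite Rabs_left; lra).
  assert (c * T2 > d) by (unfold T2; replace (c * (d/c+1)) with (d + c) by (field; lra); lra).
  assert (tau (xi + T2) < 0) by apply Hn.
  replace (xi + T2 - xi) with T2 in Hm2 by ring.
  nra.
Qed.

End Sol.

Lemma rev_sol h tau mu : 0 < h -> is_solution h tau mu ->
  is_solution h (fun t => - tau (- t)) (fun t => - mu (- t)).
Proof.
  intros Hh Hs s. destruct (Hs (-s)) as [H1 H2].
  assert (Dn: derivable_pt_lim (fun t => - t) s (-1)).
  { apply (derivable_pt_lim_opp id s 1 (derivable_pt_lim_id s)). }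
  rewrite K_odd by auto. split.
  - pose proof (derivable_pt_lim_comp (fun t => - t) tau s _ _ Dn H1) as A.
    pose proof (derivable_pt_lim_opp _ _ _ A) as B.
    eapply dlim_eq; [|exact B]. ring.
  - pose proof (derivable_pt_lim_comp (fun t => - t) mu s _ _ Dn H2) as A.
    pose proof (derivable_pt_lim_opp _ _ _ A) as B.
    eapply dlim_eq; [|exact B]. ring.
Qed.

Theorem claim3 (h : R) (tau mu : R -> R) :
  0 < h ->
  is_solution h tau mu ->
  exists s0 : R,
    tau s0 = 0 /\
    (forall s, tau s = 0 -> s = s0) /\
    (forall s, s < s0 -> tau s < 0) /\
    (forall s, s0 < s -> 0 < tau s) /\
    (forall s, (tau s0) ^ 2 + (mu s0) ^ 2 <= (tau s) ^ 2 + (mu s) ^ 2) /\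
    derivable_pt_lim (fun t => (tau t) ^ 2 + (mu t) ^ 2) s0 0 /\
    (forall s, derivable_pt_lim (fun t => (tau t) ^ 2 + (mu t) ^ 2) s 0 -> s = s0) /\
    (forall M : R, exists N : R, forall s, N < s -> M < (tau s) ^ 2 + (mu s) ^ 2) /\
    (forall M : R, exists N : R, forall s, s < N -> M < (tau s) ^ 2 + (mu s) ^ 2).
Proof.
  intros Hh Hs.
  pose proof (rev_sol h tau mu Hh Hs) as Hr.
  set (tr := fun t => - tau (- t)) in *. set (mr := fun t => - mu (- t)) in *.
  assert (Hz: exists s0, tau s0 = 0).
  { apply NNPP. intro Hn.
    assert (A: exists s, 0 < tau s).
    { apply NNPP. intro Hn2. apply (no_neg h tau mu Hh Hs). intro s.
      destruct (Rtotal_order (tau s) 0) as [?|[?|?]]; auto.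
      - exfalso. apply Hn. eauto.
      - exfalso. apply Hn2. eauto. }
    assert (B: exists s, tau s < 0).
    { apply NNPP. intro Hn2. apply (no_neg h tr mr Hh Hr). intro s. unfold tr.
      destruct (Rtotal_order (tau (-s)) 0) as [?|[?|?]].
      - exfalso. apply Hn2. eauto.
      - exfalso. apply Hn. eauto.
      - lra. }
    destruct A as [a Ha]. destruct B as [b Hb].
    destruct (Rtotal_order a b) as [Hab|[Hab|Hab]].
    - assert (0 < tau b); [|lra].
      apply (above_stays h tau mu Hh Hs 0 a b); [rewrite Rabs_R0; apply Rlt_le, dl_pos; auto|lra|auto].
    - subst; lra.
    - assert (Hc: continuity tau).
      { intro x. apply derivable_continuous_pt. exists (T' h tau mu x). apply tau_d; auto. }
      destruct (IVT tau b a Hc Hab Hb Ha) as [z [_ Hz]]. apply Hn. eauto. }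
  destruct Hz as [s0 H0].
  assert (Hd0: Rabs 0 <= dl h) by (rewrite Rabs_R0; apply Rlt_le, dl_pos; auto).
  assert (Pos: forall s, s0 < s -> 0 < tau s).
  { intros s Hs'. apply (above_stays h tau mu Hh Hs 0 s0 s); auto; lra. }
  assert (Neg: forall s, s < s0 -> tau s < 0).
  { intros s Hs'.
    assert (0 < tr (-s)); [|unfold tr in H; rewrite Ropp_involutive in H; lra].
    apply (above_stays h tr mr Hh Hr 0 (-s0) (-s)); [exact Hd0 | unfold tr; rewrite Ropp_involutive; lra | lra]. }
  exists s0. split; [auto|]. split.
  { intros s Hs'. destruct (Rtotal_order s s0) as [?|[?|?]]; auto.
    - specialize (Neg s H). lra.
    - specialize (Pos s H). lra. }
  split; [auto|]. split; [auto|]. split.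
  { intros s. destruct (Rtotal_order s s0) as [Hl|[->|Hl]]; [| lra |].
    - destruct (MVT_cor2 (fun t => tau t ^ 2 + mu t ^ 2) (fun t => 2 * tau t) s s0 Hl (fun x _ => r2_deriv h tau mu Hs x)) as [xi [Hm Hxi]].
      assert (tau xi < 0) by (apply Neg; lra). simpl in Hm. nra.
    - destruct (MVT_cor2 (fun t => tau t ^ 2 + mu t ^ 2) (fun t => 2 * tau t) s0 s Hl (fun x _ => r2_deriv h tau mu Hs x)) as [xi [Hm Hxi]].
      assert (0 < tau xi) by (apply Pos; lra). simpl in Hm. nra. }
  split.
  { eapply dlim_eq; [|apply (r2_deriv h tau mu Hs s0)]. rewrite H0. ring. }
  split.
  { intros s Hd. pose proof (uniqueness_limite _ _ _ _ Hd (r2_deriv h tau mu Hs s)).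
    destruct (Rtotal_order s s0) as [?|[?|?]]; auto.
    - specialize (Neg s H1). lra.
    - specialize (Pos s H1). lra. }
  split.
  { apply (fwd_grow h tau mu Hh Hs s0). lra. }
  intros M. destruct (fwd_grow h tr mr Hh Hr (-s0)) with (M := M) as [N HN].
  { unfold tr. rewrite Ropp_involutive. lra. }
  exists (-N). intros s Hs'. specialize (HN (-s)). unfold tr, mr in HN.
  rewrite Ropp_involutive in HN.
  assert (E: (- tau s) ^ 2 + (- mu s) ^ 2 = tau s ^ 2 + mu s ^ 2) by ring.
  rewrite <- E. apply HN. lra.
Qed.
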